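(* For every tree $T$ of order $n\ge 2$, $\sigma_t(T)\le (n-2)\,\sigma(T)$. Equality holds if and only if $T$ is the path $P_n$. Equivalently, if $\Delta(T)\ge 3$ then $\sigma_t(T)<(n-2)\sigma(T)$.
   Context: For a graph $G=(V,E)$ with vertex degrees $d(\cdot)$: $\sigma(G)=\sum_{uv\in E}(d(u)-d(v))^2$ (sum over edges) and $\sigma_t(G)=\sum_{\{u,v\}\subseteq V}(d(u)-d(v))^2$ (sum over all unordered pairs of distinct vertices). $\Delta(T)$ is the maximum degree and $P_n$ is the path on $n$ vertices. *)

(* Defs.v *)
From mathcomp Require Import all_boot all_order all_algebra.
Set Implicit Arguments. Unset Strict Implicit. Unset Printing Implicit Defensive.
Import Order.TTheory GRing.Theory Num.Theory.

Section Graphs.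
Variable T : finType.

Definition simple_graph (e : rel T) : Prop := symmetric e /\ irreflexive e.

Definition deg (e : rel T) (x : T) : nat := #|[set y | e x y]|.

Definition maxdeg (e : rel T) : nat := \max_(x : T) deg e x.

Definition connected_graph (e : rel T) : Prop := forall x y : T, connect e x y.

(* acyclic: every cycle of pairwise distinct vertices has at most 2 vertices
   (a "cycle" of 2 vertices x,y is just the edge xy traversed back and forth) *)
Definition acyclic (e : rel T) : Prop :=
  forall c : seq T, uniq c -> cycle e c -> size c < 3.

Definition is_tree (e : rel T) : Prop :=
  simple_graph e /\ connected_graph e /\ acyclic e.

Definition sigma (e : rel T) : int :=
  \sum_(x : T) \sum_(y : T | (enum_rank x < enum_rank y)%N && e x y)
     ((deg e x)%:Z - (deg e y)%:Z) ^+ 2.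

Definition sigma_t (e : rel T) : int :=
  \sum_(x : T) \sum_(y : T | (enum_rank x < enum_rank y)%N)
     ((deg e x)%:Z - (deg e y)%:Z) ^+ 2.

Definition is_path_graph (e : rel T) : Prop :=
  exists f : T -> 'I_#|T|, bijective f /\
    forall x y : T, e x y = ((f x).+1 == f y) || ((f y).+1 == f x).

End Graphs.

(* Main.v *)
Require Import Defs.
From mathcomp Require Import all_boot all_order all_algebra.
From mathcomp Require Import zify ring lra.
Set Implicit Arguments. Unset Strict Implicit. Unset Printing Implicit Defensive.
Import Order.TTheory GRing.Theory Num.Theory.

Section G.
Variable T : finType.
Variable e : rel T.
Hypothesis esym : symmetric e.
Hypothesis eirr : irreflexive e.

Definition nb (U : {set T}) x := #|[set y in U | e x y]|.
Definition DD (U : {set T}) := (\sum_(x in U) nb U x)%N.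

Lemma nb_setT x : nb setT x = deg e x.
Proof. by apply: eq_card => y; rewrite !inE. Qed.

Lemma sum_bool_card (A : {set T}) (P : pred T) :
  (\sum_(i in A) (P i : nat))%N = #|[set i in A | P i]|.
Proof.
rewrite -sum1dep_card big_mkcondr /=; apply: eq_bigr => i _.
by case: (P i).
Qed.

Lemma DD_D1 (U : {set T}) x : x \in U -> DD U = (DD (U :\ x) + 2 * nb U x)%N.
Proof.
move=> Ux; rewrite /DD (big_setD1 _ Ux) /=.
have H : forall i, i \in U :\ x -> nb U i = (nb (U :\ x) i + e i x)%N.
  move=> i _; rewrite /nb (cardsD1 x [set y in U | e i y]) !inE Ux /= addnC.
  congr (_ + _)%N; apply: eq_card => y; rewrite !inE; by rewrite andbA.
rewrite (eq_bigr _ H) big_split /= sum_bool_card.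
have -> : #|[set i in U :\ x | e i x]| = nb U x.
  apply: eq_card => y; rewrite !inE esym.
  by case: (eqVneq y x) => [->|]; rewrite ?eirr ?andbF.
by rewrite mul2n -addnn; lia.
Qed.


Lemma exit_edge (A : {set T}) x z : x \in A -> z \notin A -> connect e x z ->
  exists a b, [/\ a \in A, b \notin A & e a b].
Proof.
move=> xA zA /connectP [p pth zl]; subst z.
elim: p x xA pth zA => [|y p IH] x xA /=; first by rewrite xA.
case/andP => exy pth zA.
case: (boolP (y \in A)) => yA; first exact: IH yA pth zA.
by exists x, y.
Qed.

Definition upath (U : {set T}) (s : seq T) :=
  [&& uniq s, sorted e s & all (fun z => z \in U) s].

Lemma max_upath (U : {set T}) x0 : x0 \in U -> exists s, [/\ upath U s, (0 < size s)%N &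
  forall s', upath U s' -> (size s' <= size s)%N].
Proof.
move=> x0U.
pose P := fun k => [exists t : k.-tuple T, upath U t].
have exP : exists k, P k.
  exists 1%N; apply/existsP; exists [tuple x0]; by rewrite /upath /= x0U.
have ubP : forall k, P k -> (k <= #|T|)%N.
  move=> k /existsP [t /and3P [ut _ _]].
  by rewrite -(size_tuple t) -(card_uniqP ut); exact: max_card.
case: (ex_maxnP exP ubP) => k /existsP [t Ut] kmax.
exists t; split => //.
  rewrite size_tuple; apply: kmax; apply/existsP; exists [tuple x0].
  by rewrite /upath /= x0U.
move=> s' Us'; rewrite size_tuple; apply: kmax.
by apply/existsP; exists (in_tuple s').
Qed.

Lemma upath_head (U : {set T}) x p y :
  upath U (x :: p) ->
  (forall s', upath U s' -> (size s' <= size (x :: p))%N) ->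
  y \in U -> e x y -> y \in x :: p.
Proof.
move=> /and3P [u so al] mx yU exy; apply/negPn/negP => yn.
have : upath U (y :: x :: p).
  apply/and3P; split; first by rewrite cons_uniq yn u.
    by rewrite /= esym exy; exact: so.
  by rewrite /= yU.
by move/mx; rewrite /= ltnn.
Qed.

Lemma upath_last (U : {set T}) x p y :
  upath U (x :: p) ->
  (forall s', upath U s' -> (size s' <= size (x :: p))%N) ->
  y \in U -> e (last x p) y -> y \in x :: p.
Proof.
move=> /and3P [u so al] mx yU exy; apply/negPn/negP => yn.
have : upath U (rcons (x :: p) y).
  apply/and3P; split; first by rewrite rcons_uniq yn u.
    by rewrite /= rcons_path exy andbT; exact: so.
  by rewrite all_rcons yU.
by move/mx; rewrite size_rcons ltnn.
Qed.

Lemma cycle_of x p : sorted e (x :: p) -> e (last x p) x -> cycle e (x :: p).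
Proof. by move=> so el; rewrite /= rcons_path el andbT; exact: so. Qed.

Hypothesis acyc : acyclic e.

Lemma mindeg (U : {set T}) : U != set0 -> exists2 x, x \in U & (nb U x <= 1)%N.
Proof.
case/set0Pn => x0 x0U.
case: (boolP [exists x in U, nb U x <= 1]) => [/existsP [x /andP [? ?]]|H].
  by exists x.
exfalso.
have H2 : forall x, x \in U -> (2 <= nb U x)%N.
  move=> x xU; move/existsPn: H => /(_ x); rewrite xU /= leqNgt; by move/negPn.
case: (max_upath x0U) => s [Up spos mx]; case: s Up spos mx => [//|x p] Up _ mx.
have xU : x \in U by case/and3P: Up => _ _ /andP [].
have sub : forall y, y \in [set y in U | e x y] -> y \in p.
  move=> y; rewrite inE => /andP [yU exy].
  move: (upath_head Up mx yU exy); rewrite inE.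
  by case: eqP => [yx|//]; rewrite yx eirr in exy.
case: p Up mx sub => [|y1 q] Up mx sub.
  move: (H2 _ xU); rewrite /nb; case/card_gt0P: (ltnW (H2 _ xU)).
  by move=> y /sub.
case: (boolP [exists y, (y \in [set y in U | e x y]) && (y \in q)]).
  case/existsP => y /andP [yN yq].
  move: yN; rewrite inE => /andP [yU exy].
  case/splitPr: yq Up mx sub => q1 q2 Up _ _.
  case/and3P: Up => u so _.
  have c := acyc (c := x :: y1 :: rcons q1 y).
  have ceq : x :: y1 :: rcons q1 y = take (size q1).+3 (x :: y1 :: q1 ++ y :: q2).
    by rewrite /= take_cat ltnNge leqnSn /= subSnn /= take0 cats1.
  have u' : uniq (x :: y1 :: rcons q1 y) by rewrite ceq take_uniq.
  have so' : sorted e (x :: y1 :: rcons q1 y) by rewrite ceq take_sorted.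
  have := c u' (cycle_of so' _); rewrite /= size_rcons last_rcons esym exy.
  by move=> /(_ isT).
move/existsPn => Hq.
have : ([set y in U | e x y] \subset [set y1]).
  apply/subsetP => y yN; move: (sub _ yN); rewrite in_cons => /orP [/eqP ->|yq].
    by rewrite inE.
  by move: (Hq y); rewrite yN yq.
move/subset_leq_card; rewrite cards1 => h.
by move: (H2 _ xU); rewrite /nb; move: h; lia.
Qed.


Lemma forest_n n (U : {set T}) : #|U| = n -> U != set0 -> (DD U <= 2 * (n - 1))%N.
Proof.
elim: n U => [|n IH] U cU nz; first by move: nz; rewrite -cards_eq0 cU.
case: (mindeg nz) => x xU nbx.
rewrite (DD_D1 xU).
have cU' : #|U :\ x| = n by move: cU; rewrite (cardsD1 x) xU add1n => -[].
case: (eqVneq (U :\ x) set0) => [e0|nz'].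
  have -> : nb U x = 0%N.
    apply/eqP; rewrite cards_eq0; apply/eqP/setP => y; rewrite !inE.
    case: (boolP (y \in U)) => yU //=.
    have : y \in U :\ x = false by rewrite e0 inE.
    rewrite !inE yU andbT => /negbFE/eqP ->; by rewrite eirr.
  by rewrite /DD e0 big_set0.
have := IH _ cU' nz'.
have n1 : (1 <= n)%N by rewrite -cU' card_gt0.
by move: nbx; lia.
Qed.

Lemma forest (U : {set T}) : U != set0 -> (DD U <= 2 * (#|U| - 1))%N.
Proof. exact: forest_n. Qed.

Hypothesis conn : connected_graph e.

Lemma conn_lb k : (k <= #|T|)%N -> exists U : {set T}, #|U| = k /\ (2 * (k - 1) <= DD U)%N.
Proof.
elim: k => [|k IH] hk; first by exists set0; rewrite cards0.
case: (IH (ltnW hk)) => U [cU hU].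
case: k IH hk cU hU => [|k] IH hk cU hU.
  case/card_gt0P: hk => x _; exists [set x]; by rewrite cards1.
case: (boolP [exists z, z \notin U]) => [/existsP [z zU]|H]; last first.
  have : U = setT by apply/setP => z; rewrite inE; apply/negPn; move/existsPn: H; apply.
  by move=> UT; move: hk; rewrite -cU UT cardsT ltnn.
have : U != set0 by rewrite -cards_eq0 cU.
case/set0Pn => x xU.
case: (exit_edge xU zU (conn x z)) => a [b [aU bU eab]].
exists (b |: U); split; first by rewrite cardsU1 bU cU.
rewrite (DD_D1 (setU11 b U)) setU1K //.
have : (1 <= nb (b |: U) b)%N.
  apply/card_gt0P; exists a; by rewrite !inE aU orbT esym.
by move: hU; lia.
Qed.

Lemma DD_setT : DD setT = (\sum_x deg e x)%N.
Proof. by apply: eq_big => x; rewrite ?inE // nb_setT. Qed.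

Lemma sumdeg : (2 <= #|T|)%N -> (\sum_x deg e x)%N = (2 * (#|T| - 1))%N.
Proof.
move=> n2; rewrite -DD_setT; apply/eqP; rewrite eqn_leq.
have nz : [set: T] != set0.
  by rewrite -cards_eq0 cardsT -lt0n; apply: leq_trans n2.
rewrite (leq_trans (forest nz)) ?cardsT //.
case: (conn_lb (leqnn #|T|)) => U [cU hU].
have UT : U = setT by apply/eqP; rewrite eqEcard subsetT cU cardsT leqnn.
by rewrite UT in hU.
Qed.


Local Open Scope ring_scope.

Lemma swap_sum (R : nmodType) (Q : rel T) (F : T -> T -> R) :
  \sum_x \sum_(y | Q x y) F x y = \sum_y \sum_(x | Q x y) F x y.
Proof. by rewrite (exchange_big_dep predT). Qed.

Lemma half_sum (P : rel T) (F : T -> T -> int) : symmetric P -> irreflexive P ->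
  (forall x y, F x y = F y x) ->
  \sum_x \sum_(y | P x y) F x y =
  2 * \sum_x \sum_(y | (enum_rank x < enum_rank y)%N && P x y) F x y.
Proof.
move=> Ps Pi Fs.
have H : forall x, \sum_(y | P x y) F x y =
   \sum_(y | (enum_rank x < enum_rank y)%N && P x y) F x y +
   \sum_(y | (enum_rank y < enum_rank x)%N && P y x) F y x.
  move=> x; rewrite (bigID (fun y => (enum_rank x < enum_rank y)%N)) /=.
  congr (_ + _); first by apply: eq_bigl => y; rewrite andbC.
  apply: eq_big => y; last by move=> _; rewrite Fs.
  rewrite Ps; case: (boolP (P y x)) => pyx; rewrite ?andbF ?andbT //.
  have nxy : y != x by apply/eqP => yx; rewrite yx Pi in pyx.
  rewrite -leqNgt leq_eqVlt; case: eqP => // /val_inj/enum_rank_inj yx.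
  by rewrite yx eqxx in nxy.
rewrite (eq_bigr _ (fun x _ => H x)) big_split /=.
by rewrite [X in _ + X](swap_sum (fun y x => _)) /= mulr2n mulrDl mul1r.
Qed.


Lemma sumsq (a : T -> int) :
  \sum_x \sum_y (a x - a y) ^+ 2 =
  2 * (#|T|%:Z * \sum_x a x ^+ 2 - (\sum_x a x) ^+ 2).
Proof.
have E : forall x, \sum_y (a x - a y)^+2 =
    (a x)^+2 *+ #|T| - (a x * \sum_y a y) *+ 2 + \sum_y (a y)^+2.
  move=> x; rewrite (eq_bigr (fun y => (a x ^+2 - (a x * a y) *+ 2) + a y ^+ 2)).
    by rewrite big_split /= sumrB sumr_const mulr_sumr sumrMnl.
  by move=> y _; rewrite sqrrB.
rewrite (eq_bigr _ (fun x _ => E x)) !big_split /= sumrN sumrMnl sumrMnl.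
have -> : \sum_i a i * \sum_y a y = (\sum_x a x) ^+ 2 by rewrite expr2 mulr_suml.
have -> : \sum_(i : T) \sum_y a y ^+ 2 = (\sum_y a y ^+ 2) *+ #|T| by rewrite sumr_const.
set Q := \sum_x a x ^+ 2; set S := \sum_x a x.
rewrite -[Q *+ #|T|]mulr_natr -[_ *+ 2]mulr_natr natz; ring.
Qed.


Local Close Scope ring_scope.

Lemma cnt_between a b m :
  \sum_(t < m) ((a < t) && (t <= b)) = minn b.+1 m - minn a.+1 m.
Proof.
elim: m => [|m IH]; first by rewrite big_ord0 !minn0.
rewrite big_ord_recr /= IH.
case: (ltnP a m) => h1; case: (leqP m b) => h2 /=; lia.
Qed.

Lemma cnt_le b m : \sum_(t < m) (t <= b) = minn b.+1 m.
Proof.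
elim: m => [|m IH]; first by rewrite big_ord0 minn0.
rewrite big_ord_recr /= IH; case: (leqP m b) => h2 /=; lia.
Qed.

Local Notation d x := (deg e x).
Local Notation Dl := (maxdeg e).

Lemma d_le x : d x <= Dl.
Proof. exact: (leq_bigmax (F := fun x => deg e x)). Qed.

Lemma ex_max : 0 < #|T| -> exists x, d x = Dl.
Proof. by move=> h; case: (bigop.eq_bigmax (fun x => deg e x) h) => x hx; exists x. Qed.

Definition Pn := \sum_x \sum_y (e x y * (d x - d y)).

Lemma Pn_levels : Pn =
  \sum_(t < Dl.+1) \sum_x \sum_y (e x y && (d y < t) && (t <= d x)).
Proof.
have H : forall x y, e x y * (d x - d y) =
    \sum_(t < Dl.+1) (e x y && (d y < t) && (t <= d x)).
  move=> x y; case: (e x y); last by rewrite mul0n big1.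
  rewrite mul1n.
  rewrite cnt_between; have := d_le x; have := d_le y; lia.
rewrite /Pn (eq_bigr (fun x => \sum_(t < Dl.+1) \sum_y (e x y && (d y < t) && (t <= d x)))).
  exact: exchange_big.
by move=> x _; rewrite (eq_bigr _ (fun y _ => H x y)) exchange_big.
Qed.


Lemma sum_in (U : {set T}) (f : T -> nat) :
  \sum_(x in U) f x = \sum_x ((x \in U) * f x).
Proof. by rewrite big_mkcond; apply: eq_bigr => x _; case: (x \in U); rewrite ?mul1n. Qed.

Lemma level_ineq t : 0 < #|T| -> t <= Dl ->
  \sum_x ((t <= d x) * d x) + 2 <=
  2 * (\sum_x (t <= d x)) + \sum_x \sum_y (e x y && (d y < t) && (t <= d x)).
Proof.
move=> n0 tD.
set U := [set x | t <= d x].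
have nz : U != set0.
  by case: (ex_max n0) => x hx; apply/set0Pn; exists x; rewrite inE hx.
have f := forest nz.
have h1 : \sum_x ((t <= d x) * d x) = \sum_(x in U) d x.
  by rewrite sum_in; apply: eq_bigr => x _; rewrite inE.
have h2 : \sum_x (t <= d x) = #|U|.
  by rewrite -sum1_card sum_in; apply: eq_bigr => x _; rewrite inE muln1.
have h3 : \sum_x \sum_y (e x y && (d y < t) && (t <= d x)) =
          \sum_(x in U) #|[set y | e x y] :\: U|.
  rewrite sum_in; apply: eq_bigr => x _; rewrite inE.
  case: (t <= d x); rewrite ?mul0n ?mul1n; last by rewrite big1 // => y _; rewrite andbF.
  rewrite -sum1_card sum_in; apply: eq_bigr => y _; rewrite !inE andbT -ltnNge andbC.
  by case: (e x y); case: (d y < t).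
have h4 : \sum_(x in U) d x = DD U + \sum_(x in U) #|[set y | e x y] :\: U|.
  rewrite /DD -big_split /=; apply: eq_bigr => x _.
  rewrite /deg -(cardsID U [set y | e x y]) /nb; congr (_ + _)%N.
  by apply: eq_card => y; rewrite !inE andbC.
have Uc : 0 < #|U| by rewrite card_gt0.
rewrite h1 h2 h3 h4; move: f; lia.
Qed.


Lemma Pn_bound : 0 < #|T| ->
  \sum_x (d x * (d x).+1) + 2 * Dl.+1 <= 2 * \sum_x (d x).+1 + Pn.
Proof.
move=> n0.
have L : \sum_(t < Dl.+1) (\sum_x ((t <= d x) * d x) + 2) <=
    \sum_(t < Dl.+1) (2 * (\sum_x (t <= d x)) + \sum_x \sum_y (e x y && (d y < t) && (t <= d x))).
  by apply: leq_sum => t _; apply: (@level_ineq t n0); rewrite -ltnS.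
rewrite big_split /= sum_nat_const card_ord big_split /= -big_distrr /= in L.
have E1 : \sum_(i < Dl.+1) \sum_x ((i <= d x) * d x) = \sum_x (d x * (d x).+1).
  rewrite exchange_big; apply: eq_bigr => x _.
  rewrite -big_distrl /= cnt_le mulnC; have := d_le x.
  by move=> h; rewrite (minn_idPl _) // ltnS.
have E2 : \sum_(i < Dl.+1) \sum_x (i <= d x) = \sum_x (d x).+1.
  rewrite exchange_big; apply: eq_bigr => x _.
  by rewrite cnt_le; have := d_le x => h; rewrite (minn_idPl _) // ltnS.
rewrite E1 E2 -Pn_levels in L; move: L; lia.
Qed.


Local Open Scope ring_scope.

Lemma natz_sum (I : Type) (r : seq I) (P : pred I) (F : I -> nat) :
  ((\sum_(i <- r | P i) F i)%N)%:Z = \sum_(i <- r | P i) (F i)%:Z.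
Proof. by rewrite (big_morph Posz PoszD (erefl (Posz 0))). Qed.

Lemma sum_strict (I : finType) (P : pred I) (F G : I -> int) i0 k :
  P i0 -> (forall i, P i -> F i <= G i) -> F i0 + k <= G i0 ->
  \sum_(i | P i) F i + k <= \sum_(i | P i) G i.
Proof.
move=> Pi0 FG h; rewrite (bigD1 i0) // [X in _ <= X](bigD1 i0) //= addrAC.
by apply: lerD => //; apply: ler_sum => i /andP [? _]; apply: FG.
Qed.

Lemma sq_ge (a b : nat) : ((a - b)%N)%:Z + ((b - a)%N)%:Z <= (a%:Z - b%:Z) ^+ 2.
Proof. rewrite expr2; case: (leqP a b) => h; nia. Qed.

Lemma sq_gt (a b : nat) : (b + 2 <= a)%N ->
  ((a - b)%N)%:Z + ((b - a)%N)%:Z + 2 <= (a%:Z - b%:Z) ^+ 2.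
Proof. rewrite expr2 => h; nia. Qed.

Definition Sig2 := \sum_x \sum_(y | e x y) ((d x)%:Z - (d y)%:Z) ^+ 2.

Lemma Pn_z : (Pn%:Z) = \sum_x \sum_(y | e x y) ((d x - d y)%N)%:Z.
Proof.
rewrite /Pn natz_sum; apply: congr_big => // x _; rewrite natz_sum [RHS]big_mkcond.
by apply: congr_big => // y _; case: (e x y); rewrite ?mul1n ?mul0n.
Qed.

Lemma Pn_z' : (Pn%:Z) = \sum_x \sum_(y | e x y) ((d y - d x)%N)%:Z.
Proof.
rewrite Pn_z swap_sum; apply: eq_bigr => x _; apply: eq_bigl => y.
by rewrite esym.
Qed.

Lemma Sig2_ge : 2 * Pn%:Z <= Sig2.
Proof.
rewrite mulr2n mulrDl mul1r {1}Pn_z Pn_z' -big_split /=.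
apply: ler_sum => x _; rewrite -big_split /=; apply: ler_sum => y _.
exact: sq_ge.
Qed.

Lemma Sig2_gt u l : e u l -> (d l + 2 <= d u)%N -> 2 * Pn%:Z + 2 <= Sig2.
Proof.
move=> eul h.
rewrite mulr2n mulrDl mul1r {1}Pn_z Pn_z' -big_split /=.
apply: (sum_strict (i0 := u)) => // [x _|].
  rewrite -big_split /=; apply: ler_sum => y _; exact: sq_ge.
rewrite -big_split /=; apply: (sum_strict (i0 := l)) => // [y _|].
  exact: sq_ge.
exact: sq_gt.
Qed.

Lemma Sig2_sigma : Sig2 = 2 * sigma e.
Proof. by rewrite /Sig2 (half_sum esym eirr) // => x y; rewrite -sqrrN opprB. Qed.


Lemma sigt_eq : sigma_t e =
  #|T|%:Z * \sum_x (d x)%:Z ^+ 2 - (\sum_x (d x)%:Z) ^+ 2.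
Proof.
set F := fun x y => ((d x)%:Z - (d y)%:Z) ^+ 2.
have Hs : symmetric (fun x y : T => x != y) by move=> x y; rewrite eq_sym.
have Hi : irreflexive (fun x y : T => x != y) by move=> x; rewrite eqxx.
have Fs : forall x y, F x y = F y x by move=> x y; rewrite /F -sqrrN opprB.
have := half_sum Hs Hi Fs.
have -> : \sum_x \sum_(y | x != y) F x y = \sum_x \sum_y F x y.
  apply: eq_bigr => x _; rewrite [RHS](bigD1 x) //= /F subrr expr0n /= add0r.
  by apply: eq_bigl => y; rewrite eq_sym.
rewrite sumsq.
have -> : \sum_x \sum_(y | (enum_rank x < enum_rank y)%N && (x != y)) F x y = sigma_t e.
  apply: eq_bigr => x _; apply: eq_bigl => y.
  case: (boolP (enum_rank x < enum_rank y)%N) => //= h.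
  by apply/eqP => xy; rewrite xy ltnn in h.
move=> h; lia.
Qed.


Lemma deg_pos x : (2 <= #|T|)%N -> (1 <= d x)%N.
Proof.
move=> n2.
have : (0 < #|[set~ x]|)%N by rewrite cardsC1; lia.
case/card_gt0P => y; rewrite !inE => yx.
have xA : x \in [set x] by rewrite inE.
have yA : y \notin [set x] by rewrite inE.
case: (exit_edge xA yA (conn x y)) => a [b [aA bA eab]].
move: aA; rewrite inE => /eqP ax; subst a.
by apply/card_gt0P; exists b; rewrite inE.
Qed.

Lemma card2_le (x a b : T) : a != b -> e x a -> e x b -> (2 <= d x)%N.
Proof.
move=> ab xa xb; have <- : #|[set a; b]| = 2%N by rewrite cards2 ab.
apply: subset_leq_card.
by apply/subsetP => y; rewrite !inE => /orP [/eqP ->|/eqP ->].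
Qed.

Lemma facts : (2 <= #|T|)%N ->
  let n := #|T|%:Z in let Q := \sum_x (d x)%:Z ^+ 2 in let Dz := \sum_x (d x)%:Z in
  [/\ Dz = 2 * n - 2, sigma_t e = n * Q - Dz ^+ 2,
      Q + Dz + 2 * (Dl%:Z) + 2 <= 2 * (Dz + n) + Pn%:Z,
      2 * Pn%:Z <= 2 * sigma e &
      Q - 3 * Dz + 2 * n <= (Dl%:Z - 2) * (Dz - n)].
Proof.
move=> n2 n Q Dz.
have hD : Dz = 2 * n - 2.
  rewrite /Dz -natz_sum sumdeg // /n; lia.
split => //; first exact: sigt_eq.
- have h := Pn_bound (ltnW n2).
  move: h; move: Pn => P h.
  rewrite -lez_nat !PoszD !PoszM !natz_sum in h.
  rewrite /Q /Dz.
  have e1 : \sum_x ((d x * (d x).+1)%N)%:Z = \sum_x (d x)%:Z ^+ 2 + \sum_x (d x)%:Z.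
    rewrite -big_split; apply: eq_bigr => x _ /=; rewrite expr2; lia.
  have e2 : \sum_x ((d x).+1)%:Z = \sum_x (d x)%:Z + n.
    rewrite (eq_bigr (fun x => (d x)%:Z + 1)); last by move=> x _; rewrite -addn1 PoszD.
    by rewrite big_split /= sumr_const natz.
  rewrite e1 e2 in h; lia.
- by rewrite -Sig2_sigma; exact: Sig2_ge.
have H : \sum_x ((d x)%:Z ^+ 2 - 3 * (d x)%:Z + 2) <=
         \sum_x ((Dl%:Z - 2) * ((d x)%:Z - 1)).
  apply: ler_sum => x _; have := d_le x; have := deg_pos x n2; rewrite expr2; nia.
move: H; rewrite !big_split /= !sumrN -!mulr_sumr big_split /= sumrN.
rewrite !sumr_const !natz /Q /Dz /n => H.
have cT : #|(xpredT : pred T)| = #|T| by apply: eq_card.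
rewrite cT in H; lra.
Qed.


Lemma facts_strict1 : (2 <= #|T|)%N -> (3 <= Dl)%N -> (exists x, d x = 2%N) ->
  \sum_x (d x)%:Z ^+ 2 - 3 * \sum_x (d x)%:Z + 2 * #|T|%:Z + 1 <=
  (Dl%:Z - 2) * (\sum_x (d x)%:Z - #|T|%:Z).
Proof.
move=> n2 D3 [x0 hx0].
have H : \sum_x ((d x)%:Z ^+ 2 - 3 * (d x)%:Z + 2) + 1 <=
         \sum_x ((Dl%:Z - 2) * ((d x)%:Z - 1)).
  apply: (sum_strict (i0 := x0)) => // [x _|].
    have := d_le x; have := deg_pos x n2; rewrite expr2; nia.
  rewrite hx0; rewrite expr2; lia.
move: H; rewrite !big_split /= !sumrN -!mulr_sumr big_split /= sumrN.
rewrite !sumr_const !natz => H.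
have cT : #|(xpredT : pred T)| = #|T| by apply: eq_card.
rewrite cT in H; lra.
Qed.

Lemma strict_cases : (2 <= #|T|)%N -> (3 <= Dl)%N ->
  (exists x, d x = 2%N) \/ (exists u l, e u l /\ (d l + 2 <= d u)%N).
Proof.
move=> n2 D3.
case: (boolP [exists x, d x == 2%N]) => [/existsP [x /eqP hx]|H2]; first by left; exists x.
right.
have no2 : forall x, d x != 2%N by move=> x; move/existsPn: H2; apply.
case: (boolP [exists x, d x == 1%N]) => [/existsP [l /eqP hl]|H1]; last first.
  exfalso.
  have : (\sum_(x : T) 2 <= \sum_x d x)%N.
    apply: leq_sum => x _; have := deg_pos x n2; have := no2 x.
    by move/existsPn: H1 => /(_ x); lia.
  rewrite sumdeg // sum_nat_const.
  have cT : #|(xpredT : pred T)| = #|T| by apply: eq_card.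
  rewrite cT; lia.
have : (0 < d l)%N by rewrite hl.
case/card_gt0P => u; rewrite inE => elu.
exists u, l; split; first by rewrite esym.
rewrite hl; have := no2 u; have := deg_pos u n2.
case: (eqVneq (d u) 1%N) => [hu|]; last by lia.
exfalso.
case: (ex_max (ltnW n2)) => w hw.
set A := [set l; u].
have lA : l \in A by rewrite !inE eqxx.
have wA : w \notin A.
  rewrite !inE; apply/norP; split; apply/eqP => h; subst w; lia.
case: (exit_edge lA wA (conn l w)) => a [b [aA bA eab]].
move: aA bA; rewrite !inE => /orP [/eqP al | /eqP au] /norP [bl bu]; subst a.
- have ub : u != b by rewrite eq_sym.
  have := card2_le ub elu eab; lia.
- have lb : l != b by rewrite eq_sym.
  have eul : e u l by rewrite esym.
  have := card2_le lb eul eab; lia.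
Qed.


Local Close Scope ring_scope.

Lemma card3_le (x a b c : T) : a != b -> c != a -> c != b ->
  e x a -> e x b -> e x c -> (3 <= d x)%N.
Proof.
move=> ab ca cb xa xb xc.
have <- : #|c |: [set a; b]| = 3%N.
  by rewrite cardsU1 cards2 ab !inE negb_or ca cb.
apply: subset_leq_card.
apply/subsetP => y; rewrite !inE.
by case: (eqVneq y c) => [->|_] //=; case: (eqVneq y a) => [->|_] //= /eqP ->.
Qed.

Lemma no_long_chord (s : seq T) x0 i j : uniq s -> sorted e s ->
  (i + 2 <= j)%N -> (j < size s)%N -> ~~ e (nth x0 s j) (nth x0 s i).
Proof.
move=> us ss hij hj; apply/negP => ej.
set c := take (j - i).+1 (drop i s).
have sc : size c = (j - i).+1.
  rewrite /c size_take size_drop; case: ltnP => //; lia.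
have hd : drop i s = nth x0 s i :: drop i.+1 s by apply: drop_nth; lia.
have ceq : c = nth x0 s i :: take (j - i) (drop i.+1 s) by rewrite /c hd.
have uc : uniq c by rewrite /c take_uniq // drop_uniq.
have soc : sorted e c by rewrite /c take_sorted // drop_sorted.
have lc : last (nth x0 s i) (take (j - i) (drop i.+1 s)) = nth x0 s j.
  rewrite (last_nth x0) -ceq.
  have -> : size (take (j - i) (drop i.+1 s)) = (j - i)%N.
    by rewrite size_take size_drop; case: ltnP => //; lia.
  rewrite /c nth_take ?nth_drop; [congr nth; lia | lia].
have := acyc uc; rewrite ceq cycle_of -?ceq // ?lc // sc.
by move=> /(_ isT); lia.
Qed.


Lemma ar1 i m : i < m -> i.-1 < m. Proof. lia. Qed.
Lemma ar2 i (s : seq T) : i < size s -> i != (size s).-1 -> i.+1 < size s.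
Proof. lia. Qed.
Lemma ar3 i : i != 0 -> (i.-1 == i.+1) = false. Proof. lia. Qed.

Lemma path_of : (2 <= #|T|) -> (Dl <= 2) -> is_path_graph e.
Proof.
move=> n2 D2.
have n0 : 0 < #|T| by apply: ltnW.
case/card_gt0P: n0 => x0 _.
have x0T : x0 \in [set: T] by rewrite inE.
case: (max_upath x0T) => s [Us spos mx].
have /and3P [us ss _] := Us.
have ssP := (sortedP x0 ss).
have clo : forall x y, x \in s -> e x y -> y \in s.
  move=> x y xs exy; apply/negPn/negP => ys.
  have yT : y \in [set: T] by rewrite inE.
  case: s Us spos mx us ss ssP xs ys => [//|z p] Us _ mx us ss ssP xs ys.
  set i := index x (z :: p).
  have ilt : i < size (z :: p) by rewrite index_mem.
  have xi : nth x0 (z :: p) i = x by rewrite nth_index.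
  case: (eqVneq i 0) => [i0|in0].
    have xz : x = z by rewrite -xi i0.
    have ezy : e z y by rewrite -xz.
    by move: (upath_head Us mx yT ezy); rewrite (negbTE ys).
  case: (eqVneq i (size p)) => [ip|inp].
    have xl : x = last z p by rewrite (last_nth x0) -ip xi.
    have ely : e (last z p) y by rewrite -xl.
    by move: (upath_last Us mx yT ely); rewrite (negbTE ys).
  have h1 : i.-1 < size (z :: p) := ar1 ilt.
  have h2 : i.+1 < size (z :: p) := ar2 ilt inp.
  set a := nth x0 (z :: p) i.-1; set b := nth x0 (z :: p) i.+1.
  have ea : e x a.
    rewrite esym /a -xi; have := ssP i.-1; rewrite prednK ?lt0n //; by move/(_ ilt).
  have eb : e x b by rewrite /b -xi; apply: ssP.
  have ab : a != b by rewrite /a /b nth_uniq // ar3.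
  have ya : y != a by apply/eqP => h; move: ys; rewrite h mem_nth.
  have yb : y != b by apply/eqP => h; move: ys; rewrite h mem_nth.
  by have := leq_trans (card3_le ab ya yb ea eb exy) (leq_trans (d_le x) D2).
have cov : forall z, z \in s.
  move=> z; apply/negPn/negP => zs.
  case: s Us spos mx us ss ssP clo zs => [//|w p] Us _ mx us ss ssP clo zs.
  set A := [set v | v \in w :: p].
  have wA : w \in A by rewrite inE mem_head.
  have zA : z \notin A by rewrite inE.
  case: (exit_edge wA zA (conn w z)) => a [b [aA bA eab]].
  by move: bA; rewrite inE (clo a b _ eab) //; move: aA; rewrite inE.
have sz : size s = #|T|.
  by rewrite -(card_uniqP us); apply: eq_card => z; rewrite cov.
have fi : forall x, index x s < #|T| by move=> x; rewrite -sz index_mem cov.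
exists (fun x => Ordinal (fi x)); split.
  apply: inj_card_bij; last by rewrite card_ord.
  move=> x y [] h; by rewrite -(nth_index x0 (cov x)) h nth_index.
move=> x y /=.
have xi : nth x0 s (index x s) = x := nth_index x0 (cov x).
have yj : nth x0 s (index y s) = y := nth_index x0 (cov y).
have ilt : index x s < size s by rewrite index_mem.
have jlt : index y s < size s by rewrite index_mem.
apply/idP/idP.
- move=> exy; case: (ltngtP (index x s) (index y s)) => h.
  + case: (eqVneq (index x s).+1 (index y s)) => //= h1.
    have h2 : index x s + 2 <= index y s by move: h h1; lia.
    by move: (no_long_chord x0 us ss h2 jlt); rewrite xi yj esym exy.
  + have [h1|h1] := eqVneq (index y s).+1 (index x s).
      by apply/orP; right; apply/eqP. have h2 : index y s + 2 <= index x s by move: h h1; lia.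
    by move: (no_long_chord x0 us ss h2 ilt); rewrite xi yj exy.
  + by move: exy; rewrite -xi h yj eirr.
- case/orP => /eqP h.
  + by rewrite -xi -yj -h; apply: ssP; rewrite h.
  + by rewrite esym -xi -yj -h; apply: ssP; rewrite h.
Qed.


Local Open Scope ring_scope.

Lemma dz_sum x : (d x)%:Z = \sum_(y | e x y) 1.
Proof. by rewrite /deg -sum1dep_card natz_sum. Qed.

Lemma eq_case : (2 <= #|T|)%N -> (Dl <= 2)%N -> (#|T|%:Z - 2) * sigma e <= sigma_t e.
Proof.
move=> n2 D2.
have dd : forall x, d x = 1%N \/ d x = 2%N.
  by move=> x; have := deg_pos x n2; have := d_le x; lia.
have cT : #|(xpredT : pred T)| = #|T| by apply: eq_card.
have S1 : Sig2 <= \sum_x \sum_(y | e x y) ((d x == 1%N)%:Z + (d y == 1%N)%:Z).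
  apply: ler_sum => x _; apply: ler_sum => y _.
  by case: (dd x) => ->; case: (dd y) => ->.
have S2 : forall x, \sum_(y | e x y) ((d x == 1%N)%:Z) = (d x == 1%N)%:Z * (d x)%:Z.
  by move=> x; rewrite [(d x)%:Z]dz_sum mulr_sumr; apply: eq_bigr => y _; rewrite mulr1.
have S3 : \sum_x \sum_(y | e x y) ((d y == 1%N)%:Z) = \sum_x (d x == 1%N)%:Z * (d x)%:Z.
  rewrite swap_sum; apply: eq_bigr => x _; rewrite -S2; apply: eq_bigl => y.
  by rewrite esym.
have S4 : \sum_x (d x == 1%N)%:Z * (d x)%:Z = \sum_x (2 - (d x)%:Z).
  by apply: eq_bigr => x _; case: (dd x) => ->.
have S5 : \sum_x ((d x)%:Z ^+ 2) = \sum_x (3 * (d x)%:Z - 2).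
  by apply: eq_bigr => x _; case: (dd x) => ->.
move: S1; rewrite (eq_bigr _ (fun x _ => big_split _ _ _ _ _)) big_split /=.
rewrite (eq_bigr _ (fun x _ => S2 x)) S3 S4 sumrB sumr_const natz cT.
rewrite Sig2_sigma => S1.
case: (facts n2) => hD hst _ _ _.
move: hst; rewrite S5 sumrB -mulr_sumr sumr_const natz cT => hst.
rewrite hst; move: hD S1; move: (\sum_x (d x)%:Z) => Dz hD S1.
rewrite hD in S1 *; nia.
Qed.

Lemma path_deg : is_path_graph e -> forall x, (d x <= 2)%N.
Proof.
case=> f [fb fe] x.
have sub : [set y | e x y] \subset
    [set y | (f x).+1 == f y] :|: [set y | (f y).+1 == f x].
  by apply/subsetP => y; rewrite !inE fe.
have c1 : (#|[set y | (f x).+1 == f y]| <= 1)%N.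
  apply/card_le1_eqP => y z; rewrite !inE => /eqP hy /eqP hz.
  by apply: (bij_inj fb); apply: ord_inj; rewrite -hy -hz.
have c2 : (#|[set y | (f y).+1 == f x]| <= 1)%N.
  apply/card_le1_eqP => y z; rewrite !inE => /eqP hy /eqP hz.
  by apply: (bij_inj fb); apply: ord_inj; move: hy hz; lia.
have := subset_leq_card sub; rewrite cardsU /deg; lia.
Qed.


Lemma deg_lt_n x : (d x < #|T|)%N.
Proof.
have : (d x <= #|[set~ x]|)%N.
  apply: subset_leq_card; apply/subsetP => y; rewrite !inE.
  by apply: contraTneq => ->; rewrite eirr.
rewrite cardsC1 => h; have : (0 < #|T|)%N by apply/card_gt0P; exists x.
lia.
Qed.

Lemma main_sec : (2 <= #|T|)%N ->
  [/\ sigma_t e <= (#|T|%:Z - 2) * sigma e,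
      sigma_t e = (#|T|%:Z - 2) * sigma e <-> is_path_graph e
    & (3 <= maxdeg e)%N -> sigma_t e < (#|T|%:Z - 2) * sigma e].
Proof.
move=> n2.
have [hD hst hP hsig hpsi] := facts n2.
have n2z : 2 <= #|T|%:Z by rewrite lez_nat.
have weak : sigma_t e <= (#|T|%:Z - 2) * sigma e.
  have h1 : (#|T|%:Z - 2) * Pn%:Z <= (#|T|%:Z - 2) * sigma e.
    apply: ler_wpM2l; lia.
  move: hD hst hP hsig hpsi h1.
  move: (\sum_x (d x)%:Z) (\sum_x (d x)%:Z ^+ 2) (Pn%:Z) (sigma e) (sigma_t e) (Dl%:Z) (#|T|%:Z) n2z.
  move=> Dz Q P s st D n n2' hD' hst' hP' hs' hps' h1'.
  rewrite hst' hD'; rewrite hD' in hP' hps'; nia.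
have strict : (3 <= maxdeg e)%N -> sigma_t e < (#|T|%:Z - 2) * sigma e.
  move=> D3; case: (strict_cases n2 D3) => [h2|[u [l [eul hul]]]].
    have hs1 := facts_strict1 n2 D3 h2.
    have h1 : (#|T|%:Z - 2) * Pn%:Z <= (#|T|%:Z - 2) * sigma e.
      apply: ler_wpM2l; lia.
    move: hD hst hP hsig hs1 h1.
    move: (\sum_x (d x)%:Z) (\sum_x (d x)%:Z ^+ 2) (Pn%:Z) (sigma e) (sigma_t e) (Dl%:Z) (#|T|%:Z) n2z.
    move=> Dz Q P s st D n n2' hD' hst' hP' hs' hps' h1'.
    rewrite hst' hD'; rewrite hD' in hP' hps'; nia.
  have hg := Sig2_gt eul hul; rewrite Sig2_sigma in hg.
  have n3 : 3 <= #|T|%:Z.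
    case: (ex_max (ltnW n2)) => w hw; have := deg_lt_n w; rewrite lez_nat; lia.
  have h1 : (#|T|%:Z - 2) * (Pn%:Z + 1) <= (#|T|%:Z - 2) * sigma e.
    apply: ler_wpM2l; lia.
  move: hD hst hP hg hpsi h1.
  move: (\sum_x (d x)%:Z) (\sum_x (d x)%:Z ^+ 2) (Pn%:Z) (sigma e) (sigma_t e) (Dl%:Z) (#|T|%:Z) n3.
  move=> Dz Q P s st D n n3' hD' hst' hP' hs' hps' h1'.
  rewrite hst' hD'; rewrite hD' in hP' hps'; nia.
split => //; split.
- move=> heq; apply: path_of => //; rewrite leqNgt; apply/negP => D3.
  by move: (strict D3); rewrite heq ltxx.
- move=> hp; apply/eqP; rewrite eq_le weak /=.
  apply: eq_case => //.
  by case: (ex_max (ltnW n2)) => w <-; apply: path_deg.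
Qed.

End G.

Local Open Scope ring_scope.

Theorem theorem2 (T : finType) (e : rel T) :
  is_tree e -> (2 <= #|T|)%N ->
  [/\ sigma_t e <= (#|T|%:Z - 2) * sigma e,
      sigma_t e = (#|T|%:Z - 2) * sigma e <-> is_path_graph e
    & (3 <= maxdeg e)%N -> sigma_t e < (#|T|%:Z - 2) * sigma e].
Proof.
case=> [[esym eirr] [conn acyc]] n2.
exact: (main_sec esym eirr acyc conn n2).
Qed.
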